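(* Let $P,R\in\mathrm{Sym}(n,\mathbb{R})$, $Q\in\mathrm{Mat}(n,\mathbb{R})$ and constants $C_1,C_2,C_3>0$ with $\langle Pv,v\rangle\ge C_1|v|^2$, $|Pv|\ge C_1|v|$, $|Qv|\le C_2|v|$, $|Rv|\le C_3|v|$ for all $v\in\mathbb{R}^n$. For $\lambda\in\mathbb{R}$ let $B_\lambda=\begin{bmatrix}P^{-1}&-P^{-1}Q\\-Q^TP^{-1}&Q^TP^{-1}Q-R-\lambda I_n\end{bmatrix}$ and $J=\begin{bmatrix}0&-I_n\\ I_n&0\end{bmatrix}$. Then $JB_\lambda$ is hyperbolic for every $\lambda>C_2^2/C_1+C_3$.
   Context: A real matrix is hyperbolic if it has no eigenvalue on the imaginary axis. *)

(* Defs.v *)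
From mathcomp Require Import all_boot all_order all_algebra.
From mathcomp Require Import reals.
From mathcomp Require Import complex.
Set Implicit Arguments. Unset Strict Implicit. Unset Printing Implicit Defensive.
Import Order.TTheory GRing.Theory Num.Theory.
Local Open Scope ring_scope.

Definition vnorm (R : realType) (n : nat) (v : 'cV[R]_n) : R :=
  Num.sqrt (\sum_(i < n) v i 0 ^+ 2).

Definition vdot (R : realType) (n : nat) (u v : 'cV[R]_n) : R :=
  \sum_(i < n) u i 0 * v i 0.

Definition complexify (R : realType) (m : nat) (A : 'M[R]_m) : 'M[R[i]]_m :=
  map_mx (fun x => (x%:C)%C) A.

Definition hyperbolic (R : realType) (m : nat) (A : 'M[R]_m) : Prop :=
  forall z : R[i], eigenvalue (complexify A) z -> complex.Re z != 0.

Arguments complexify {R m}.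
Definition Jmx (R : realType) (n : nat) : 'M[R]_(n + n) :=
  block_mx 0 (- 1%:M) 1%:M 0.

Definition Bmx (R : realType) (n : nat) (P Q Rm : 'M[R]_n) (lam : R)
  : 'M[R]_(n + n) :=
  block_mx (invmx P) (- (invmx P *m Q))
           (- (Q^T *m invmx P)) (Q^T *m invmx P *m Q - Rm - lam%:M).
Arguments Jmx {R} n.

(* Main.v *)
Require Import Defs.
From mathcomp Require Import all_boot all_order all_algebra.
From mathcomp Require Import reals.
From mathcomp Require Import complex.
From mathcomp Require Import ring lra.
Import Order.TTheory GRing.Theory Num.Theory.
Local Open Scope ring_scope.
Set Implicit Arguments. Unset Strict Implicit.

Section Helpers.
Variable R : realType.

Lemma Re_sum I (r : seq I) (P : pred I) (F : I -> R[i]) :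
  complex.Re (\sum_(i <- r | P i) F i) = \sum_(i <- r | P i) complex.Re (F i).
Proof. by apply: (big_morph (@complex.Re R) (id1 := 0) (op1 := +%R)) => // -[? ?] [? ?]. Qed.

Lemma Im_sum I (r : seq I) (P : pred I) (F : I -> R[i]) :
  complex.Im (\sum_(i <- r | P i) F i) = \sum_(i <- r | P i) complex.Im (F i).
Proof. by apply: (big_morph (@complex.Im R) (id1 := 0) (op1 := +%R)) => // -[? ?] [? ?]. Qed.

Lemma Re_mulmx p q (X : 'M[R[i]]_(p,q)) (M : 'M[R]_q) :
  map_mx (@complex.Re R) (X *m complexify M) = map_mx (@complex.Re R) X *m M.
Proof.
apply/matrixP => i j; rewrite !mxE Re_sum; apply: eq_bigr => k _; rewrite !mxE.
by case: (X i k) => a b /=; rewrite mulr0 subr0.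
Qed.

Lemma Im_mulmx p q (X : 'M[R[i]]_(p,q)) (M : 'M[R]_q) :
  map_mx (@complex.Im R) (X *m complexify M) = map_mx (@complex.Im R) X *m M.
Proof.
apply/matrixP => i j; rewrite !mxE Im_sum; apply: eq_bigr => k _; rewrite !mxE.
by case: (X i k) => a b /=; rewrite mulr0 add0r.
Qed.

Lemma Re_scale p q (m : R) (X : 'M[R[i]]_(p,q)) :
  map_mx (@complex.Re R) (Complex 0 m *: X) = - m *: map_mx (@complex.Im R) X.
Proof.
apply/matrixP => i j; rewrite !mxE.
by case: (X i j) => a b /=; rewrite mul0r add0r mulNr.
Qed.

Lemma Im_scale p q (m : R) (X : 'M[R[i]]_(p,q)) :
  map_mx (@complex.Im R) (Complex 0 m *: X) = m *: map_mx (@complex.Re R) X.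
Proof.
apply/matrixP => i j; rewrite !mxE.
by case: (X i j) => a b /=; rewrite mul0r add0r.
Qed.

End Helpers.
Section H2.
Variable R : realType.
Variable n : nat.
Definition sq (v : 'cV[R]_n) := \sum_(i < n) v i 0 ^+ 2.

Lemma sq_ge0 (v : 'cV[R]_n) : 0 <= sq v.
Proof. by apply: sumr_ge0 => i _; rewrite sqr_ge0. Qed.

Lemma vnorm_sq (v : 'cV[R]_n) : vnorm v ^+ 2 = sq v.
Proof. by rewrite /vnorm sqr_sqrtr // sq_ge0. Qed.

Lemma vnorm_ge0 (v : 'cV[R]_n) : 0 <= vnorm v.
Proof. exact: sqrtr_ge0. Qed.

Lemma sq_eq0 (v : 'cV[R]_n) : sq v = 0 -> v = 0.
Proof.
move=> /psumr_eq0P H; apply/matrixP => i j; rewrite ord1 mxE.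
by apply/eqP; rewrite -sqrf_eq0; apply/eqP; apply: H => // k _; rewrite sqr_ge0.
Qed.

Lemma bound_sq (C : R) (w v : 'cV[R]_n) : 0 < C -> vnorm w <= C * vnorm v ->
  sq w <= C ^+ 2 * sq v.
Proof.
move=> Cp H; rewrite -!vnorm_sq.
have := vnorm_ge0 w; have := vnorm_ge0 v => h1 h2.
nra.
Qed.

Lemma young (t : R) (x y : 'cV[R]_n) : 0 < t ->
  2 * `|vdot x y| <= t * sq x + t^-1 * sq y.
Proof.
move=> tp.
have Ep : \sum_(i < n) (t * x i 0 + y i 0) ^+ 2 = t^+2 * sq x + 2 * t * vdot x y + sq y.
  rewrite /sq /vdot !mulr_sumr -!big_split /=; apply: eq_bigr => i _; ring.
have Em : \sum_(i < n) (t * x i 0 - y i 0) ^+ 2 = t^+2 * sq x - 2 * t * vdot x y + sq y.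
  rewrite /sq /vdot !mulr_sumr -sumrN -!big_split /=; apply: eq_bigr => i _; ring.
have Hp : 0 <= \sum_(i < n) (t * x i 0 + y i 0) ^+ 2 by apply: sumr_ge0 => i _; rewrite sqr_ge0.
have Hm : 0 <= \sum_(i < n) (t * x i 0 - y i 0) ^+ 2 by apply: sumr_ge0 => i _; rewrite sqr_ge0.
rewrite Ep in Hp; rewrite Em in Hm.
have H1 : `|2 * t * vdot x y| <= t ^+ 2 * sq x + sq y.
  by rewrite ler_norml; apply/andP; split; lra.
rewrite !normrM (ger0_norm (ltW tp)) ger0_norm // in H1.
rewrite -(ler_pM2l tp) mulrDr (mulrA t t^-1) mulfV ?gt_eqF // mul1r.
rewrite expr2 in H1; nra.
Qed.

Lemma form_vdot (a b : 'rV[R]_n) (K : 'M[R]_n) :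
  (a *m K *m b^T) 0 0 = vdot (K *m b^T) a^T.
Proof.
rewrite -mulmxA mxE /vdot; apply: eq_bigr => i _; by rewrite !mxE mulrC.
Qed.
End H2.

Lemma ac4 (V : zmodType) (p q r s : V) : p + q + r + s = q + s + p + r.
Proof. by rewrite [p + q]addrC -!addrA; congr (_ + _); rewrite [s + _]addrC -addrA. Qed.
Lemma expandE (R : comRingType) n (x y : 'rV[R]_n) (X A Q Rm : 'M[R]_n) lam :
  x *m -(X *m Q - Rm - lam%:M) + y *m -(A *m Q) = -((x *m X + y *m A) *m Q) + x *m Rm + lam *: x.
Proof.
by rewrite !mulmxN !mulmxBr mul_mx_scalar mulmxDl !mulmxA opprD !opprB opprK opprD ac4.
Qed.

Lemma fl_add n (R : realType) (x y w : 'rV[R]_n) : ((x + y) *m w^T) 0 0 = (x *m w^T) 0 0 + (y *m w^T) 0 0.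
Proof. by rewrite mulmxDl mxE. Qed.
Lemma fl_scale n (R : realType) c (x w : 'rV[R]_n) : ((c *: x) *m w^T) 0 0 = c * (x *m w^T) 0 0.
Proof. by rewrite -scalemxAl mxE. Qed.
Lemma fl_opp n (R : realType) (x w : 'rV[R]_n) : ((- x) *m w^T) 0 0 = - (x *m w^T) 0 0.
Proof. by rewrite mulNmx mxE. Qed.
Lemma fl_tr n (R : realType) (x y : 'rV[R]_n) K : (x *m K^T *m y^T) 0 0 = (y *m K *m x^T) 0 0.
Proof. have -> : x *m K^T *m y^T = (y *m K *m x^T)^T by rewrite !trmx_mul trmxK mulmxA. by rewrite mxE. Qed.
Lemma fl_sq n (R : realType) (x : 'rV[R]_n) : (x *m x^T) 0 0 = sq x^T.
Proof. by rewrite mxE /sq; apply: eq_bigr => i _; rewrite !mxE expr2. Qed.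

Lemma young_bd n (R : realType) (C : R) (K : 'M[R]_n) (x y : 'cV[R]_n) : 0 < C ->
  (forall v, vnorm (K *m v) <= C * vnorm v) -> 2 * `|vdot (K *m x) y| <= C * sq x + C * sq y.
Proof.
move=> Cp HK.
have Ci : 0 < C^-1 by rewrite invr_gt0.
have := young (K *m x) y Ci; rewrite invrK => h.
have : C^-1 * sq (K *m x) <= C * sq x.
  rewrite -(ler_pM2l Cp) mulrA mulfV ?gt_eqF // mul1r mulrA -expr2; exact: bound_sq.
lra.
Qed.

Theorem corollary2p4 (R : realType) (n : nat) (P Q Rm : 'M[R]_n)
  (C1 C2 C3 : R) :
  P^T = P -> Rm^T = Rm ->
  0 < C1 -> 0 < C2 -> 0 < C3 ->
  (forall v : 'cV[R]_n, vdot (P *m v) v >= C1 * vnorm v ^+ 2) ->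
  (forall v : 'cV[R]_n, vnorm (P *m v) >= C1 * vnorm v) ->
  (forall v : 'cV[R]_n, vnorm (Q *m v) <= C2 * vnorm v) ->
  (forall v : 'cV[R]_n, vnorm (Rm *m v) <= C3 * vnorm v) ->
  forall lam : R, lam > C2 ^+ 2 / C1 + C3 ->
  hyperbolic (Jmx n *m Bmx P Q Rm lam).
Proof.
move=> PT RT C1p C2p C3p HP HPn HQ HR lam Hlam z /eigenvalueP [v Hv vnz].
apply/negP => /eqP Hre.
have zE : z = Complex 0 (complex.Im z) by case: z Hre {Hv} => ? ? /= ->.
move: (complex.Im z) zE => mu zE; rewrite {z Hre}zE in Hv.
set A := invmx P.
have ME : Jmx n *m Bmx P Q Rm lam = block_mx (Q^T *m A) (-(Q^T *m A *m Q - Rm - lam%:M)) A (-(A *m Q)).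
  rewrite /Jmx /Bmx mulmx_block !mul0mx !mul1mx !mulNmx !mul1mx.
  by rewrite !add0r !addr0 opprK.
rewrite ME in Hv.
set a := map_mx (@complex.Re R) v; set b := map_mx (@complex.Im R) v.
have Ea := congr1 (map_mx (@complex.Re R)) Hv.
have Eb := congr1 (map_mx (@complex.Im R)) Hv.
rewrite Re_mulmx Re_scale -/a -/b in Ea.
rewrite Im_mulmx Im_scale -/a -/b in Eb.
rewrite -(hsubmxK a) -(hsubmxK b) mul_row_block scale_row_mx in Ea.
rewrite -(hsubmxK a) -(hsubmxK b) mul_row_block scale_row_mx in Eb.
case/eq_row_mx: Ea => E1 E2; case/eq_row_mx: Eb => E3 E4.
set a1 := lsubmx a in E1 E2 E3 E4; set a2 := rsubmx a in E1 E2 E3 E4.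
set b1 := lsubmx b in E1 E2 E3 E4; set b2 := rsubmx b in E1 E2 E3 E4.
have Pu : P \in unitmx.
  rewrite -row_free_unit -kermx_eq0; case: (eqVneq (kermx P) 0) => // /rowV0Pn [u /sub_kermxP uP unz].
  have Pu0 : P *m u^T = 0 by rewrite -PT -trmx_mul uP trmx0.
  have := HPn u^T; rewrite Pu0 => h.
  have n0: vnorm (0 : 'cV[R]_n) = 0.
    by rewrite /vnorm big1 ?sqrtr0 // => i _; rewrite mxE expr0n.
  rewrite n0 in h.
  have : vnorm u^T = 0 by have := vnorm_ge0 u^T; nra.
  move=> /(congr1 (fun x => x ^+ 2)); rewrite vnorm_sq expr0n /= => /sq_eq0.
  move=> /(congr1 trmx); rewrite trmxK trmx0 => u0; by rewrite u0 eqxx in unz.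
have F1 : a1 *m Q^T + a2 = - mu *: (b1 *m P).
  have := congr1 (mulmxr P) E1; rewrite /= mulmxDl -!mulmxA mulVmx // !mulmx1 -scalemxAl.
  done.
have F3 : b1 *m Q^T + b2 = mu *: (a1 *m P).
  have := congr1 (mulmxr P) E3; rewrite /= mulmxDl -!mulmxA mulVmx // !mulmx1 -scalemxAl.
  done.
rewrite expandE E1 in E2. rewrite expandE E3 in E4.
rewrite -!scalemxAl in E2 E4.
have s1 := congr1 (fun M => (M *m a1^T) 0 0) E2; rewrite /= !(fl_add, fl_opp, fl_scale) fl_sq in s1.
have s2 := congr1 (fun M => (M *m a1^T) 0 0) F3; rewrite /= !(fl_add, fl_opp, fl_scale) fl_tr in s2.
have s3 := congr1 (fun M => (M *m b1^T) 0 0) E4; rewrite /= !(fl_add, fl_opp, fl_scale) fl_sq in s3.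
have s4 := congr1 (fun M => (M *m b1^T) 0 0) F1; rewrite /= !(fl_add, fl_opp, fl_scale) fl_tr in s4.
have hpa : C1 * sq a1^T <= (a1 *m P *m a1^T) 0 0.
  by rewrite form_vdot -vnorm_sq; apply: HP.
have hpb : C1 * sq b1^T <= (b1 *m P *m b1^T) 0 0.
  by rewrite form_vdot -vnorm_sq; apply: HP.
have hra : 2 * `|(a1 *m Rm *m a1^T) 0 0| <= C3 * sq a1^T + C3 * sq a1^T.
  by rewrite form_vdot; apply: young_bd.
have hrb : 2 * `|(b1 *m Rm *m b1^T) 0 0| <= C3 * sq b1^T + C3 * sq b1^T.
  by rewrite form_vdot; apply: young_bd.
have hx1 : 2 * `|(a1 *m Q *m b1^T) 0 0| <= C2 * sq b1^T + C2 * sq a1^T.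
  by rewrite form_vdot; apply: young_bd.
have hx2 : 2 * `|(b1 *m Q *m a1^T) 0 0| <= C2 * sq a1^T + C2 * sq b1^T.
  by rewrite form_vdot; apply: young_bd.
have sa0 := sq_ge0 a1^T; have sb0 := sq_ge0 b1^T.
have Spos : 0 < sq a1^T + sq b1^T.
  rewrite lt_neqAle addr_ge0 // andbT; apply/negP => /eqP /esym S0.
  have sa : sq a1^T = 0 by lra.
  have sb : sq b1^T = 0 by lra.
  move/sq_eq0/(congr1 trmx): sa; rewrite trmxK trmx0 => a10.
  move/sq_eq0/(congr1 trmx): sb; rewrite trmxK trmx0 => b10.
  rewrite a10 b10 !mul0mx in F1 F3.
  have a20 : a2 = 0 by rewrite -[a2]add0r F1; apply/matrixP => i j; rewrite !mxE mulr0.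
  have b20 : b2 = 0 by rewrite -[b2]add0r F3; apply/matrixP => i j; rewrite !mxE mulr0.
  have Ha : a = 0 by rewrite -(hsubmxK a) -/a1 -/a2 a10 a20 row_mx0.
  have Hb : b = 0 by rewrite -(hsubmxK b) -/b1 -/b2 b10 b20 row_mx0.
  move/eqP: vnz; apply; apply/matrixP => i j.
  move/matrixP/(_ i j): Ha; move/matrixP/(_ i j): Hb.
  rewrite !mxE /=; by case: (v i j) => /= x y -> ->.
move: s1 s2 s3 s4 hpa hpb hra hrb hx1 hx2 Spos sa0 sb0.
set X1 := (a1 *m Q *m b1^T) 0 0; set X2 := (b1 *m Q *m a1^T) 0 0.
set ra := (a1 *m Rm *m a1^T) 0 0; set rb := (b1 *m Rm *m b1^T) 0 0.
set pa := (a1 *m P *m a1^T) 0 0; set pb := (b1 *m P *m b1^T) 0 0.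
set sa := sq a1^T; set sb := sq b1^T.
set b2a := (b2 *m a1^T) 0 0; set a2b := (a2 *m b1^T) 0 0.
move=> s1 s2 s3 s4 hpa hpb hra hrb hx1 hx2 Spos sa0 sb0.
have Hid : ra + rb + lam * (sa + sb) + mu ^+ 2 * (pa + pb) = 2 * mu * (X1 - X2).
  have e1 : b2a = mu * pa - X1 by lra.
  have e2 : a2b = - mu * pb - X2 by lra.
  rewrite e1 in s1; rewrite e2 in s3.
  rewrite expr2; nra.
have nra_ : - ra <= `|ra| by rewrite -normrN ler_norm.
have nrb : - rb <= `|rb| by rewrite -normrN ler_norm.
have hm : mu * (X1 - X2) <= `|mu| * (`|X1| + `|X2|).
  apply: le_trans (ler_norm _) _; rewrite normrM; apply: ler_wpM2l; [exact: normr_ge0 | exact: ler_normB].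
have mu2 : mu ^+ 2 = `|mu| ^+ 2 by rewrite real_normK // num_real.
rewrite mu2 in Hid; move: hm Hid; set m := `|mu|; move=> hm Hid.
have m0 : 0 <= m by rewrite /m normr_ge0.
have t1 : m ^+ 2 * (C1 * (sa + sb)) <= m ^+ 2 * (pa + pb).
  by apply: ler_wpM2l; [exact: sqr_ge0 | lra].
have t2 : m * (`|X1| + `|X2|) <= m * (C2 * (sa + sb)).
  by apply: ler_wpM2l => //; lra.
have hK : (lam - C3 + m ^+ 2 * C1 - 2 * m * C2) * (sa + sb) <= 0.
  have e1 : m ^+ 2 * (C1 * (sa + sb)) = m ^+ 2 * C1 * (sa + sb) by rewrite mulrA.
  have e2 : m * (C2 * (sa + sb)) = m * C2 * (sa + sb) by rewrite mulrA.
  rewrite e1 in t1; rewrite e2 in t2.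
  nra.
have hK2 : lam - C3 + m ^+ 2 * C1 - 2 * m * C2 <= 0.
  nra.
have hk : C2 ^+ 2 / C1 * C1 = C2 ^+ 2 by rewrite mulfVK ?gt_eqF.
move: Hlam hk; set k := C2 ^+ 2 / C1 => Hlam hk.
have := sqr_ge0 (m * C1 - C2).
nra.
Qed.
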